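(* Let $G$ be a connected graph with $N$ vertices and maximum degree $\Delta$, let $k,R$ be positive integers with $N>2k(\Delta^{4R}+1)$, and let $H$ be a $k$-local operator (not necessarily Hermitian) of range at most $R$ on the qubits at the vertices of $G$. If $H|W^p\rangle=E_p|W^p\rangle$ with $E_p\in\mathbb{C}$ for all $p\in\{0,1,\dots,N\}$, then there exist constants $\Omega,\omega\in\mathbb{C}$ with $E_p=\Omega+\omega p$ for all $p\in\{0,1,\dots,N\}$.
   Context: System of $N$ qubits on the vertices of a graph $G$ with local basis $|0\rangle,|1\rangle$. For each vertex $i$, $s_i^\dagger$ acts on $i$ as $s^\dagger|0\rangle=|1\rangle$, $s^\dagger|1\rangle=0$, $s_i=(s_i^\dagger)^\dagger$; $|\overline 0\rangle=|0\rangle^{\otimes N}$. Distances are graph distances. Every operator has a unique expansion in normal-ordered strings $s^\dagger_{j_1}\cdots s^\dagger_{j_n}s_{k_1}\cdots s_{k_m}$ (the $j$'s pairwise distinct, the $k$'s pairwise distinct, overlaps allowed), whose sites are $\{j_1,\dots,j_n,k_1,\dots,k_m\}$. A string has range $R$, where $R$ is the smallest positive integer with all pairwise distances between its sites $<R$; an operator has range at most $R$ if every string with nonzero coefficient has range at most $R$, and is $k$-local if every such string involves at most $k$ distinct sites. $S^\dagger=\sum_i s_i^\dagger$ and $|W^p\rangle$ is the normalization of $(S^\dagger)^p|\overline 0\rangle$ for $p=0,\dots,N$. *)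

(* Defs.v *)
From HB Require Import structures.
From mathcomp Require Import all_boot all_order all_algebra fingraph.
From mathcomp Require Import reals complex.
Set Implicit Arguments. Unset Strict Implicit. Unset Printing Implicit Defensive.
Import Order.TTheory GRing.Theory Num.Theory.
Local Open Scope ring_scope.

Section Defs.
Variable V : finType.

Definition simple_graph (e : rel V) := symmetric e /\ irreflexive e.
Definition connected_graph (e : rel V) := forall i j : V, connect e i j.
Definition max_degree (e : rel V) : nat := \max_(i : V) #|[set j | e i j]|.

Definition walk_of_length (e : rel V) (n : nat) (i j : V) : bool :=
  [exists p : n.-tuple V, path e i p && (last i p == j)].

(* graph distance: the least n with a walk of length n from i to j
   (defaults to #|V| if none, which cannot happen in a connected graph) *)
Definition gdist (e : rel V) (i j : V) : nat :=
  find (fun n => walk_of_length e n i j) (iota 0 #|V|).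

(* the smallest positive integer R with all pairwise distances of the sites < R *)
Definition str_range (e : rel V) (S : {set V}) : nat :=
  (\max_(i in S) \max_(j in S) gdist e i j).+1.

Variable C : nzRingType.

(* basis |x>, x : {set V} the set of sites in state |1> *)
Definition state := {set V} -> C.

Definition ket0 : state := fun x => if x == set0 then 1 else 0.

Definition sdag (i : V) (v : state) : state :=
  fun x => if i \in x then v (x :\ i) else 0.
Definition sann (i : V) (v : state) : state :=
  fun x => if i \in x then 0 else v (i |: x).

(* normal-ordered string s^dag_{j1}...s^dag_{jn} s_{k1}...s_{km}
   with {j..} = J, {k..} = K *)
Definition nstring (J K : {set V}) (v : state) : state :=
  foldr sdag (foldr sann v (enum K)) (enum J).

Definition Sdag (v : state) : state := fun x => \sum_(i : V) sdag i v x.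

Definition klocal_range (e : rel V) (k R : nat) (H : state -> state) : Prop :=
  exists c : {set V} -> {set V} -> C,
    (forall J K, c J K != 0 -> (#|J :|: K| <= k)%N /\ (str_range e (J :|: K) <= R)%N) /\
    (forall v x, H v x = \sum_(J : {set V}) \sum_(K : {set V}) c J K * nstring J K v x).

End Defs.

Definition Wstate (R : realType) (V : finType) (p : nat) : state V R[i] :=
  let v := iter p (@Sdag V R[i]) (@ket0 V R[i]) in
  fun x => (sqrtC (\sum_(y : {set V}) `|v y| ^+ 2))^-1 * v x.

(* Main.v *)
Require Import Defs.
From HB Require Import structures.
From mathcomp Require Import all_boot all_order all_algebra fingraph.
From mathcomp Require Import reals complex.
From mathcomp Require Import ring zify.
Import Order.TTheory GRing.Theory Num.Theory.
Set Implicit Arguments. Unset Strict Implicit. Unset Printing Implicit Defensive.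
Local Open Scope ring_scope.

Section Str.
Variable V : finType.
Variable C : nzRingType.

Lemma set_cons (i : V) s : [set t in i :: s] = i |: [set t in s].
Proof. by apply/setP=> t; rewrite !inE. Qed.
Lemma set_nil : [set t in [::] : seq V] = set0.
Proof. by apply/setP=> t; rewrite !inE. Qed.

Lemma foldr_sann (s : seq V) (v : state V C) x : uniq s ->
  foldr (@sann V C) v s x =
  if [disjoint s & x] then v (x :|: [set t in s]) else 0.
Proof.
elim: s x => [|i s IH] x /=.
  by rewrite set_nil disjoint_has /= setU0.
move=> /andP[nis us]; rewrite /sann IH // disjoint_cons set_cons.
case: (boolP (i \in x)) => ix //=.
have -> : [disjoint s & i |: x] = [disjoint s & x].
  rewrite !disjoint_has; congr (~~ _); apply: eq_in_has => t ts /=.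
  rewrite !inE; case: (t =P i) => // E; by rewrite E (negbTE nis) in ts.
by rewrite setUCA setUA.
Qed.

Lemma foldr_sdag (s : seq V) (v : state V C) x : uniq s ->
  foldr (@sdag V C) v s x =
  if all [in x] s then v (x :\: [set t in s]) else 0.
Proof.
elim: s x => [|i s IH] x /=.
  by rewrite set_nil setD0.
move=> /andP[nis us]; rewrite /sdag IH // set_cons.
case: (boolP (i \in x)) => ix //=.
have -> : all [in x :\ i] s = all [in x] s.
  apply: eq_in_all => t ts /=.
  rewrite !inE; case: (t =P i) => // E; by rewrite E (negbTE nis) in ts.
by rewrite setDDl setUC.
Qed.

Lemma nstringE J K (v : state V C) x :
  nstring J K v x = if (J \subset x) && [disjoint K & x :\: J]
                    then v ((x :\: J) :|: K) else 0.
Proof.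
rewrite /nstring foldr_sdag ?enum_uniq // set_enum.
have -> : all [in x] (enum J) = (J \subset x).
  apply/allP/subsetP => H t; first by move=> tJ; apply: H; rewrite mem_enum.
  by rewrite mem_enum => /H.
case: (J \subset x) => //=.
rewrite foldr_sann ?enum_uniq // set_enum.
by rewrite (eq_disjoint (mem_enum K)).
Qed.
End Str.

Section W.
Variable V : finType.
Variable C : nzRingType.

Lemma iterE p (y : {set V}) :
  iter p (@Sdag V C) (@ket0 V C) y = (p`!)%:R * (#|y| == p)%:R.
Proof.
elim: p y => [|p IH] y /=.
  by rewrite /ket0 cards_eq0 fact0 mul1r; case: (y == set0).
rewrite /Sdag.
under eq_bigr => i _ do rewrite /sdag IH.
rewrite -big_mkcond /=.
rewrite (eq_bigr (fun _ => p`!%:R * (#|y| == p.+1)%:R)); last first.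
  by move=> i iy; rewrite (cardsD1 i y) iy add1n eqSS.
rewrite sumr_const.
case: (#|y| =P p.+1) => [->|_]; last by rewrite !mulr0 mul0rn.
by rewrite !mulr1 factS natrM mulr_natl.
Qed.
End W.
Lemma subset_size (T : finType) (A : {set T}) p : (p <= #|A|)%N ->
  exists2 z : {set T}, z \subset A & #|z| = p.
Proof.
move=> hp; exists [set t in take p (enum A)].
  apply/subsetP => t; rewrite inE => /mem_take; by rewrite mem_enum.
rewrite cardsE (card_uniqP _); last by rewrite take_uniq ?enum_uniq.
by rewrite size_take -cardE; case: ltngtP hp => // ->.
Qed.

Lemma WstateE (R : realType) (V : finType) p : (p <= #|V|)%N ->
  exists2 b : R[i], b != 0 & forall x, @Wstate R V p x = b * (#|x| == p)%:R.
Proof.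
move=> hp.
set v := iter p (@Sdag V R[i]) (@ket0 V R[i]).
set g := (sqrtC (\sum_(y : {set V}) `|v y| ^+ 2))^-1.
exists (g * p`!%:R); last first.
  by move=> x; rewrite /Wstate -/v -/g /v iterE mulrA.
have f0 : (p`!%:R : R[i]) != 0 by rewrite pnatr_eq0 -lt0n fact_gt0.
rewrite mulf_neq0 // invr_eq0 sqrtC_eq0 psumr_eq0; last by move=> *; rewrite exprn_ge0.
have [z _ hz] : exists2 z : {set V}, z \subset setT & #|z| = p.
  by apply: subset_size; rewrite cardsT.
apply/allPn; exists z; first by rewrite mem_index_enum.
by rewrite /= sqrf_eq0 normr_eq0 /v iterE hz eqxx mulr1.
Qed.
Definition tJK (V : finType) (J K x : {set V}) : bool :=
  [&& J \subset x, [disjoint K & x :\: J] & #|J| == #|K|].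

Lemma card_cond (V : finType) (J K x : {set V}) :
  J \subset x -> [disjoint K & x :\: J] ->
  (#|(x :\: J) :|: K| == #|x|) = (#|J| == #|K|).
Proof.
move=> sJ dK.
have h1 := cardsID J x.
rewrite (setIidPr sJ) in h1.
rewrite cardsU (disjoint_setI0 (_ : [disjoint x :\: J & K])); last by rewrite disjoint_sym.
rewrite cards0 subn0 -h1.
apply/eqP/eqP; lia.
Qed.

Lemma eig (R : realType) (V : finType) (c : {set V} -> {set V} -> R[i])
  (H : state V R[i] -> state V R[i]) (E : nat -> R[i]) :
  (forall v x, H v x = \sum_(J : {set V}) \sum_(K : {set V}) c J K * nstring J K v x) ->
  (forall p : nat, (p <= #|V|)%N ->
     H (@Wstate R V p) = (fun x => E p * @Wstate R V p x)) ->
  forall x, \sum_(J : {set V}) \sum_(K : {set V}) c J K * (tJK J K x)%:R = E #|x|.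
Proof.
move=> HF HE x.
have hp : (#|x| <= #|V|)%N by apply: max_card.
have [b hb hW] := WstateE R hp.
have := congr1 (fun f => f x) (HE _ hp); rewrite /= HF hW eqxx mulr1.
move=> h; apply: (mulIf hb); rewrite -h mulr_suml; apply: eq_bigr => J _.
rewrite mulr_suml; apply: eq_bigr => K _.
rewrite nstringE.
rewrite /tJK -mulrA; congr (_ * _).
case: (boolP (J \subset x)) => sJ /=; last by rewrite mul0r.
case: (boolP [disjoint K & x :\: J]) => dK /=; last by rewrite mul0r.
by rewrite hW card_cond // mulrC.
Qed.

Lemma tJK_loc (V : finType) (J K x : {set V}) a : a \notin J :|: K ->
  tJK J K (a |: x) = tJK J K x.
Proof.
rewrite inE negb_or => /andP[aJ aK]; rewrite /tJK.
have -> : (J \subset a |: x) = (J \subset x).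
  apply/subsetP/subsetP => h t tJ; last by rewrite inE h ?orbT.
  have := h t tJ; rewrite !inE => /orP[/eqP E|//].
  by rewrite E (negbTE aJ) in tJ.
have -> : [disjoint K & (a |: x) :\: J] = [disjoint K & x :\: J].
  rewrite !disjoint_subset; apply/subsetP/subsetP => h t tK.
    by have := h t tK; rewrite !inE; apply: contra => /andP[-> ->]; rewrite orbT.
  have := h t tK; rewrite !inE; apply: contra => /andP[-> /orP[/eqP E|//]].
  by rewrite E (negbTE aK) in tK.
done.
Qed.

Lemma second_diff (V : finType) (C : nzRingType) (c : {set V} -> {set V} -> C) a b z :
  (forall J K, c J K != 0 -> ~~ ((a \in J :|: K) && (b \in J :|: K))) ->
  let f x := \sum_(J : {set V}) \sum_(K : {set V}) c J K * (tJK J K x)%:R in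
  f (a |: (b |: z)) + f z = f (a |: z) + f (b |: z).
Proof.
move=> hc f; rewrite /f -!big_split /=; apply: eq_bigr => J _.
rewrite -!big_split /=; apply: eq_bigr => K _.
case: (c J K =P 0) => [->|/eqP /hc]; first by rewrite !mul0r !addr0.
rewrite negb_and => /orP[ha|hb].
  by rewrite !(@tJK_loc V J K _ a ha) addrC.
by rewrite setUCA !(@tJK_loc V J K _ b hb).
Qed.


Lemma lin_rec (C : comNzRingType) (E : nat -> C) (N : nat) :
  (forall p, (p.+2 <= N)%N -> E p.+2 + E p = E p.+1 + E p.+1) ->
  forall p, (p <= N)%N -> E p = E 0%N + (E 1%N - E 0%N) * p%:R.
Proof.
move=> hr.
have key : forall p, (p.+1 <= N)%N ->
  E p = E 0%N + (E 1%N - E 0%N) * p%:R /\ E p.+1 = E 0%N + (E 1%N - E 0%N) * p.+1%:R.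
  elim=> [|p IH] hp.
    by split; rewrite ?mulr0 ?addr0 // mulr1 addrC subrK.
  have [h1 h2] := IH (ltnW hp).
  split => //.
  have := hr p hp; rewrite h1 h2 => h.
  have -> : E p.+2 = E 0%N + (E 1%N - E 0%N) * p.+1%:R + (E 0%N + (E 1%N - E 0%N) * p.+1%:R)
     - (E 0%N + (E 1%N - E 0%N) * p%:R) by rewrite -h addrK.
  rewrite -[p.+2]addn2 -[p.+1]addn1 !natrD; ring.
case=> [|p] hp; first by rewrite mulr0 addr0.
by have [] := key p hp.
Qed.


Local Open Scope nat_scope.
Section G.
Variable V : finType.
Variable e : rel V.

Fixpoint Wb (n : nat) (a : V) : {set V} :=
  if n is n'.+1 then \bigcup_(x | e a x) Wb n' x else [set a].

Lemma walkW n a j : walk_of_length e n a j -> j \in Wb n a.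
Proof.
elim: n a => [|n IH] a /existsP [[p sz] /andP[hp /eqP hl]].
  by move: sz hp hl; case: p => //= _ _ ->; rewrite inE.
move: sz hp hl; case: p => [|x p] //= sz /andP[eax hp] hl.
apply/bigcupP; exists x => //; apply: IH; apply/existsP.
by exists (Tuple sz); rewrite /= hp hl eqxx.
Qed.

Lemma card_bigcup_le (I : finType) (P : pred I) (F : I -> {set V}) :
  #|\bigcup_(i | P i) F i| <= \sum_(i | P i) #|F i|.
Proof.
apply: (big_ind2 (fun (A : {set V}) n => #|A| <= n)) => //.
  by rewrite cards0.
move=> A1 n1 A2 n2 h1 h2; rewrite cardsU.
by apply: leq_trans (leq_subr _ _) _; apply: leq_add.
Qed.

Lemma deg_le a : #|[set j | e a j]| <= max_degree e.
Proof. rewrite /max_degree. exact: (@leq_bigmax V (fun i => #|[set j | e i j]|) a). Qed.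

Lemma cardW n a : #|Wb n a| <= (max_degree e) ^ n.
Proof.
elim: n a => [|n IH] a /=; first by rewrite cards1.
apply: (leq_trans (card_bigcup_le _ _)).
apply: (@leq_trans (\sum_(x | e a x) max_degree e ^ n)); first by apply: leq_sum => x _; apply: IH.
rewrite sum_nat_const expnS leq_mul2r; apply/orP; right.
apply: leq_trans (deg_le a); rewrite cardsE; apply: subset_leq_card.
by [].
Qed.

Lemma Wb_shrink n a : symmetric e -> max_degree e <= 1 ->
  Wb n.+2 a \subset Wb n a.
Proof.
move=> sym hd; apply/subsetP => j /bigcupP [x eax /bigcupP [y exy hj]].
have : #|[set t | e x t]| <= 1 := leq_trans (deg_le x) hd.
move/card_le1_eqP => h.
have xa : a \in [set t | e x t] by rewrite inE sym.
have xy : y \in [set t | e x t] by rewrite inE.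
by have := h _ _ xa xy => /= <-.
Qed.
End G.

Lemma geom (D m : nat) : 2 <= D -> \sum_(n < m) D ^ n < D ^ m.
Proof.
move=> hD; elim: m => [|m IH]; first by rewrite big_ord0 expn0.
rewrite big_ord_recr /= expnS.
have : D ^ m + D ^ m <= D * D ^ m by rewrite addnn -mul2n leq_mul2r hD orbT.
move=> h; apply: leq_trans h; by rewrite ltn_add2r.
Qed.

Lemma far (V : finType) (e : rel V) (k Rg : nat) :
  simple_graph e -> connected_graph e -> (0 < k)%N -> (0 < Rg)%N ->
  (2 * k * ((max_degree e) ^ (4 * Rg) + 1) < #|V|)%N ->
  exists a b : V, [/\ a != b, (Rg <= #|V|)%N &
     forall n, (n < Rg)%N -> ~~ walk_of_length e n a b].
Proof.
move=> [sym irr] conn k0 R0 hN.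
set D := max_degree e in hN.
set X := D ^ (4 * Rg) in hN.
have hN2 : 2 * (X + 1) < #|V|.
  apply: leq_ltn_trans hN; rewrite leq_mul2r; apply/orP; right; lia.
have : 0 < #|V| by lia.
case/card_gt0P => a _.
case: (leqP D 1) => hD.
  pose B := Wb e 0 a :|: Wb e 1 a.
  have cB : #|B| <= 2.
    rewrite cardsU; apply: leq_trans (leq_subr _ _) _.
    have := cardW e 0 a; have := cardW e 1 a; rewrite -/D expn0 expn1; lia.
  have : ~~ ([set: V] \subset B).
    by apply/negP => /subset_leq_card; rewrite cardsT; lia.
  case/subsetPn => b _ hb.
  have allW : forall n, Wb e n a \subset B /\ Wb e n.+1 a \subset B.
    elim=> [|n [h0 h1]]; first by split; [apply: subsetUl | apply: subsetUr].
    by split => //; apply: subset_trans (Wb_shrink n a sym hD) h0.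
  have := conn a b; case/connectP => p hp hl.
  have hw : walk_of_length e (size p) a b.
    by apply/existsP; exists (in_tuple p); rewrite /= hp hl eqxx.
  have := walkW hw; have [h0 _] := allW (size p).
  by move/(subsetP h0) => hB; rewrite hB in hb.
pose B := \bigcup_(n < Rg) Wb e n a.
have cB : #|B| < D ^ Rg.
  apply: leq_ltn_trans (card_bigcup_le _ _) _.
  apply: leq_ltn_trans (geom Rg hD).
  by apply: leq_sum => n _; apply: cardW.
have hX : D ^ Rg <= X by rewrite /X leq_pexp2l; lia.
have : ~~ ([set: V] \subset B).
  by apply/negP => /subset_leq_card; rewrite cardsT; lia.
case/subsetPn => b _ hb.
exists a, b; split.
- apply: contraNneq hb => <-; apply/bigcupP; exists (Ordinal R0) => //.
  by rewrite /= inE.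
- have : Rg < 2 ^ Rg by apply: ltn_expl.
  have : 2 ^ Rg <= D ^ Rg by rewrite leq_exp2r.
  lia.
- move=> n hn; apply/negP => /walkW hw.
  by move/negP: hb; apply; apply/bigcupP; exists (Ordinal hn).
Qed.

Local Open Scope ring_scope.

Lemma gdist_walk (V : finType) (e : rel V) a b :
  (gdist e a b < #|V|)%N -> walk_of_length e (gdist e a b) a b.
Proof.
move=> h; rewrite /gdist in h *.
have hs : (find (fun n => walk_of_length e n a b) (iota 0 #|V|) < size (iota 0 #|V|))%N
  by rewrite size_iota.
rewrite -has_find in hs; have := nth_find 0%N hs; rewrite nth_iota ?add0n //.
Qed.

Theorem theorem2 (R : realType) (V : finType) (e : rel V) (k Rg : nat)
    (H : state V R[i] -> state V R[i]) (E : nat -> R[i]) :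
  simple_graph e -> connected_graph e ->
  (0 < k)%N -> (0 < Rg)%N ->
  (2 * k * ((max_degree e) ^ (4 * Rg) + 1) < #|V|)%N ->
  klocal_range e k Rg H ->
  (forall p : nat, (p <= #|V|)%N ->
     H (@Wstate R V p) = (fun x => E p * @Wstate R V p x)) ->
  exists Omega omega : R[i],
    forall p : nat, (p <= #|V|)%N -> E p = Omega + omega * p%:R.
Proof.
move=> sg cg k0 R0 hN [c [hc HF]] HE.
have [a [b [ab hRg hw]]] := far sg cg k0 R0 hN.
have hcab : forall J K, c J K != 0 -> ~~ ((a \in J :|: K) && (b \in J :|: K)).
  move=> J K /hc [_ hs]; apply/negP => /andP[ha hb].
  have hd : (gdist e a b < Rg)%N.
    apply: leq_trans hs; rewrite /str_range ltnS.
    apply: (@bigop.bigmax_sup V a (fun i => i \in J :|: K) _ (fun i => \max_(j in J :|: K) gdist e i j)%N ha).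
    exact: (@bigop.bigmax_sup V b (fun j => j \in J :|: K) _ (fun j => gdist e a j) hb).
  have := hw _ hd; rewrite gdist_walk //.
  exact: leq_trans hd hRg.
have hf := eig HF HE.
exists (E 0%N), (E 1%N - E 0%N).
apply: (@lin_rec _ E #|V|) => p hp.
have hC : (p <= #|~: [set a; b]|)%N.
  have := cardsC [set a; b]; rewrite cards2 ab /= => h.
  have h2 : (2 + #|~: [set a; b]| = #|V|)%N := h. lia.
have [z hz cz] := subset_size hC.
have az : a \notin z.
  by apply/negP => /(subsetP hz); rewrite !inE eqxx.
have bz : b \notin z.
  by apply/negP => /(subsetP hz); rewrite !inE eqxx orbT.
have := second_diff z hcab; rewrite /= !hf.
have abz : a \notin b |: z by rewrite !inE negb_or ab az.
by rewrite !cardsU1 abz az bz cz.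
Qed.
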